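(* Let $\mu=\mu(n)$ and $\lambda=\lambda(n)$ be positive integers depending on $n$, and consider the expected runtime of the $(\mu,\lambda)$ EA on the $n$-dimensional OneMax function. 1. If there is a constant $\varepsilon\in(0,1)$ such that $\lambda\le(1-\varepsilon)e\mu$, then the expected runtime is exponential in $n$. 2. If there is $\varepsilon=\varepsilon(n)\in(0,1)$ with $\varepsilon=\omega(1/\sqrt n)$ such that $\lambda\le(1-\varepsilon)e\mu$, then the expected runtime is super-polynomial in $n$.
   Context: OneMax is $f:\{0,1\}^n\to\mathbb{R}$, $f(x)=\sum_i x_i$. The $(\mu,\lambda)$ EA: the initial population $P_0$ consists of $\mu$ independent uniformly random points of $\{0,1\}^n$. In each generation $t=0,1,2,\dots$, it creates $\lambda$ offspring independently; each offspring is obtained by picking a parent uniformly at random from $P_t$ and flipping each bit of a copy of it independently with probability $1/n$ (standard bit mutation). $P_{t+1}$ consists of the $\mu$ offspring with the largest $f$-values, ties broken randomly (parents are discarded). The runtime is the number of fitness evaluations until an optimum (the all-ones string) is first evaluated. *)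

(* Defs.v *)
From Stdlib Require Import Reals Lra Lia Arith List.
Import ListNotations.
Open Scope R_scope.

Definition dist (A : Type) : Type := list (R * A).

Definition ret {A : Type} (x : A) : dist A := [(1, x)].

Definition bind {A B : Type} (d : dist A) (f : A -> dist B) : dist B :=
  flat_map (fun px => map (fun qy => (fst px * fst qy, snd qy)) (f (snd px))) d.

(** Uniform distribution over the positions of a list (duplicates counted
    with multiplicity). *)
Definition uniform {A : Type} (l : list A) : dist A :=
  map (fun x => (/ INR (length l), x)) l.

Definition mass {A : Type} (P : A -> bool) (d : dist A) : R :=
  fold_right Rplus 0 (map (fun px => if P (snd px) then fst px else 0) d).

Definition bitstring := list bool.

Fixpoint allbits (n : nat) : list bitstring :=
  match n with
  | O => [[]]
  | S m => flat_map (fun s => [false :: s; true :: s]) (allbits m)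
  end.

Definition onemax (x : bitstring) : nat := length (filter (fun b => b) x).

Definition is_opt (x : bitstring) : bool := forallb (fun b => b) x.

Fixpoint mutate (p : R) (x : bitstring) : dist bitstring :=
  match x with
  | [] => ret []
  | b :: y =>
      bind [(1 - p, b); (p, negb b)] (fun b' =>
      bind (mutate p y) (fun y' => ret (b' :: y')))
  end.

(** * Selection: the mu best (by OneMax) with uniformly random tie-breaking,
    implemented as a uniformly random shuffle followed by a stable sort
    (descending fitness) and keeping the first mu. *)
Fixpoint remove_nth {A : Type} (i : nat) (l : list A) : list A :=
  match l, i with
  | [], _ => []
  | _ :: t, O => t
  | h :: t, S j => h :: remove_nth j t
  end.

Fixpoint shuffle_aux (fuel : nat) (l : list bitstring) : dist (list bitstring) :=
  match fuel with
  | O => ret []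
  | S f =>
      bind (uniform (seq 0 (length l))) (fun i =>
      bind (shuffle_aux f (remove_nth i l)) (fun r =>
      ret (nth i l [] :: r)))
  end.

Definition shuffle (l : list bitstring) : dist (list bitstring) :=
  shuffle_aux (length l) l.

Fixpoint insert_desc (x : bitstring) (l : list bitstring) : list bitstring :=
  match l with
  | [] => [x]
  | y :: ys => if Nat.leb (onemax y) (onemax x) then x :: y :: ys
               else y :: insert_desc x ys
  end.

Fixpoint sort_desc (l : list bitstring) : list bitstring :=
  match l with
  | [] => []
  | x :: xs => insert_desc x (sort_desc xs)
  end.

Definition select (mu : nat) (off : list bitstring) : dist (list bitstring) :=
  bind (shuffle off) (fun s => ret (firstn mu (sort_desc s))).

(** * The (mu,lambda) EA as a Markov chain whose steps are single fitness
    evaluations. *)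
Inductive state : Type :=
| Init (pop : list bitstring)                    (* initial points evaluated so far *)
| Gen (pop : list bitstring) (off : list bitstring)  (* parents, offspring so far *)
| Done.                                          (* optimum has been evaluated *)

Definition step (n mu lam : nat) (s : state) : dist state :=
  match s with
  | Done => ret Done
  | Init pop =>
      bind (uniform (allbits n)) (fun x =>
        if is_opt x then ret Done
        else let pop' := pop ++ [x] in
             if Nat.eqb (length pop') mu then ret (Gen pop' [])
             else ret (Init pop'))
  | Gen pop off =>
      bind (uniform pop) (fun parent =>
      bind (mutate (/ INR n) parent) (fun y =>
        if is_opt y then ret Done
        else let off' := off ++ [y] in
             if Nat.eqb (length off') lam
             then bind (select mu off') (fun P => ret (Gen P []))
             else ret (Gen pop off')))
  end.

Fixpoint state_after (n mu lam k : nat) : dist state :=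
  match k with
  | O => ret (Init [])
  | S j => bind (state_after n mu lam j) (step n mu lam)
  end.

Definition not_done (s : state) : bool :=
  match s with Done => false | _ => true end.

(** P(T > k), T = number of fitness evaluations until the optimum is first
    evaluated *)
Definition runtime_tail (n mu lam k : nat) : R :=
  mass not_done (state_after n mu lam k).

(** E[T] >= B, using E[T] = sum_{k>=0} P(T > k) (allowing E[T] = +infinity). *)
Definition expected_runtime_ge (n mu lam : nat) (B : R) : Prop :=
  exists K : nat,
    fold_right Rplus 0 (map (runtime_tail n mu lam) (seq 0 K)) >= B.

(* Main.v *)
Require Import Defs.
From Stdlib Require Import Reals Lra Lia Arith List Permutation ClassicalDescription FunctionalExtensionality.
Import ListNotations.
Open Scope R_scope.

Definition E {A : Type} (f : A -> R) (d : Defs.dist A) : R :=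
  fold_right Rplus 0 (map (fun px => fst px * f (snd px)) d).
Definition tot {A : Type} (d : Defs.dist A) : R := E (fun _ => 1) d.
Definition nneg {A : Type} (d : Defs.dist A) : Prop := forall px, In px d -> 0 <= fst px.

Lemma E_nil {A} (f : A -> R) : E f [] = 0.
Proof. reflexivity. Qed.
Lemma E_cons {A} (f : A -> R) p x d : E f ((p,x)::d) = p * f x + E f d.
Proof. reflexivity. Qed.
Lemma E_app {A} (f : A -> R) d1 d2 : E f (d1 ++ d2) = E f d1 + E f d2.
Proof. induction d1 as [|[p x] d IH]; simpl. unfold E; simpl; ring.
  unfold E in *; simpl. rewrite IH. ring. Qed.
Lemma E_ret {A} (f : A -> R) x : E f (ret x) = f x.
Proof. unfold E, ret; simpl. ring. Qed.
Lemma E_scalemap {A} (f : A -> R) p (l : Defs.dist A) :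
  E f (map (fun qy => (p * fst qy, snd qy)) l) = p * E f l.
Proof. induction l as [|[q y] l IH]. unfold E; simpl; ring.
  unfold E in *; simpl in *. rewrite IH. ring. Qed.
Lemma E_bind {A B} (f : B -> R) (d : Defs.dist A) (g : A -> Defs.dist B) :
  E f (bind d g) = E (fun x => E f (g x)) d.
Proof. induction d as [|[p x] d IH]. reflexivity.
  unfold bind in *; simpl. rewrite E_app, E_scalemap, IH. reflexivity. Qed.
Lemma E_ext_in {A} (f g : A -> R) d :
  (forall px, In px d -> f (snd px) = g (snd px)) -> E f d = E g d.
Proof. induction d as [|[p x] d IH]; intros H. reflexivity.
  rewrite !E_cons. pose proof (H (p,x) (or_introl eq_refl)) as Hx. simpl in Hx. rewrite Hx.
  rewrite IH. auto. intros; apply H; right; auto. Qed.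
Lemma E_mono {A} (f g : A -> R) d : nneg d ->
  (forall px, In px d -> f (snd px) <= g (snd px)) -> E f d <= E g d.
Proof. induction d as [|[p x] d IH]; intros Hn H. unfold E; simpl; lra.
  rewrite !E_cons. assert (0 <= p) by (apply (Hn (p,x)); left; auto).
  assert (f x <= g x) by (apply (H (p,x)); left; auto).
  assert (E f d <= E g d). { apply IH. intros px Hp; apply Hn; right; auto. intros; apply H; right; auto. }
  nra. Qed.
Lemma E_plus {A} (f g : A -> R) d : E (fun x => f x + g x) d = E f d + E g d.
Proof. induction d as [|[p x] d IH]. unfold E; simpl; ring. rewrite !E_cons, IH. ring. Qed.
Lemma E_scal {A} (f : A -> R) c d : E (fun x => c * f x) d = c * E f d.
Proof. induction d as [|[p x] d IH]. unfold E; simpl; ring. rewrite !E_cons, IH. ring. Qed.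
Lemma E_const {A} c (d : Defs.dist A) : E (fun _ => c) d = c * tot d.
Proof. unfold tot. rewrite <- E_scal. apply E_ext_in. intros; simpl; ring. Qed.
Lemma E_nneg {A} (f : A -> R) d : nneg d -> (forall px, In px d -> 0 <= f (snd px)) -> 0 <= E f d.
Proof. intros. replace 0 with (E (fun _ => 0) d). apply E_mono; auto.
  rewrite E_const; ring. Qed.

Lemma mass_E {A} (P : A -> bool) d : mass P d = E (fun x => if P x then 1 else 0) d.
Proof. induction d as [|[p x] d IH]. reflexivity.
  unfold mass in *; simpl. rewrite IH. rewrite E_cons. destruct (P x); ring. Qed.

Lemma in_bind {A B} (d : Defs.dist A) (g : A -> Defs.dist B) py :
  In py (bind d g) -> exists px q, In px d /\ In (q, snd py) (g (snd px)).
Proof. unfold bind. intros H. apply in_flat_map in H. destruct H as [px [H1 H2]].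
  apply in_map_iff in H2. destruct H2 as [qy [H3 H4]]. subst py. simpl.
  exists px, (fst qy). split; auto. destruct qy; auto. Qed.
Lemma nneg_bind {A B} (d : Defs.dist A) (g : A -> Defs.dist B) :
  nneg d -> (forall px, In px d -> nneg (g (snd px))) -> nneg (bind d g).
Proof. unfold nneg, bind. intros H1 H2 py H. apply in_flat_map in H. destruct H as [px [Ha Hb]].
  apply in_map_iff in Hb. destruct Hb as [qy [H3 H4]]. subst py. simpl.
  apply Rmult_le_pos. apply H1; auto. apply (H2 px); auto. Qed.
Lemma nneg_ret {A} (x : A) : nneg (ret x).
Proof. intros px [H|[]]. subst; simpl; lra. Qed.
Lemma in_ret {A} (x : A) px : In px (ret x) -> snd px = x.
Proof. intros [H|[]]. subst; reflexivity. Qed.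
Lemma tot_bind {A B} (d : Defs.dist A) (g : A -> Defs.dist B) : tot (bind d g) = E (fun x => tot (g x)) d.
Proof. unfold tot. apply E_bind. Qed.
Lemma tot_ret {A} (x : A) : tot (ret x) = 1.
Proof. unfold tot; rewrite E_ret; reflexivity. Qed.
Lemma tot_bind1 {A B} (d : Defs.dist A) (g : A -> Defs.dist B) : tot d = 1 ->
  (forall px, In px d -> tot (g (snd px)) = 1) -> tot (bind d g) = 1.
Proof. intros H1 H2. rewrite tot_bind. rewrite <- H1. unfold tot at 2. apply E_ext_in. auto. Qed.
Lemma tot_bind_le {A B} (d : Defs.dist A) (g : A -> Defs.dist B) : nneg d -> tot d <= 1 ->
  (forall px, In px d -> tot (g (snd px)) <= 1) -> tot (bind d g) <= 1.
Proof. intros H0 H1 H2. rewrite tot_bind. eapply Rle_trans; [|apply H1].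
  unfold tot at 2. apply E_mono; auto. Qed.

Definition lsum {A} (f : A -> R) (l : list A) := fold_right Rplus 0 (map f l).
Lemma E_uniform {A} (f : A -> R) l : E f (uniform l) = / INR (length l) * lsum f l.
Proof. unfold uniform, lsum. generalize (/ INR (length l)). intros c.
  induction l as [|x l IH]. unfold E; simpl; ring. simpl. rewrite E_cons, IH. simpl. ring. Qed.
Lemma in_uniform {A} (l : list A) px : In px (uniform l) -> In (snd px) l /\ fst px = / INR (length l).
Proof. unfold uniform. intros H. apply in_map_iff in H. destruct H as [x [H1 H2]]. subst; simpl; auto. Qed.
Lemma nneg_uniform {A} (l : list A) : nneg (uniform l).
Proof. intros px H. apply in_uniform in H. destruct H as [_ ->].
  destruct (length l) eqn:E0. simpl. rewrite Rinv_0; lra.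
  left. apply Rinv_0_lt_compat. apply lt_0_INR; lia. Qed.
Lemma lsum_const {A} c (l : list A) : lsum (fun _ => c) l = INR (length l) * c.
Proof. induction l; unfold lsum in *; simpl. ring. rewrite IHl. destruct (length l); simpl; ring. Qed.
Lemma tot_uniform {A} (l : list A) : l <> [] -> tot (uniform l) = 1.
Proof. intros H. unfold tot. rewrite E_uniform, lsum_const.
  destruct l. congruence. simpl length. field. apply not_0_INR. lia. Qed.
Lemma tot_uniform_le {A} (l : list A) : tot (uniform l) <= 1.
Proof. destruct l. unfold tot, E; simpl; lra. rewrite tot_uniform; [lra| congruence]. Qed.


Lemma mutate_cons p b x : mutate p (b :: x) =
  bind [(1 - p, b); (p, negb b)] (fun b' => bind (mutate p x) (fun y' => ret (b' :: y'))).
Proof. reflexivity. Qed.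
Lemma shuffle_S f l : shuffle_aux (S f) l =
  bind (uniform (seq 0 (length l))) (fun i =>
      bind (shuffle_aux f (remove_nth i l)) (fun r => ret (nth i l [] :: r))).
Proof. reflexivity. Qed.

Lemma mutate_len p x py : In py (mutate p x) -> length (snd py) = length x.
Proof. revert py; induction x as [|b x IH]; intros py H.
  simpl in H. apply in_ret in H. rewrite H; reflexivity.
  rewrite mutate_cons in H. apply in_bind in H. destruct H as [pb [q [H1 H2]]].
  apply in_bind in H2. destruct H2 as [py' [q' [H3 H4]]]. apply in_ret in H4. simpl in H4.
  rewrite H4. simpl. f_equal. apply IH in H3. auto. Qed.

Lemma nneg_mutate p x : 0 <= p <= 1 -> nneg (mutate p x).
Proof. intros Hp. induction x as [|b x IH]. apply nneg_ret. rewrite mutate_cons.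
  apply nneg_bind. intros px [H|[H|[]]]; subst; simpl; lra.
  intros. apply nneg_bind; auto. intros; apply nneg_ret. Qed.

Lemma tot_mutate p x : tot (mutate p x) = 1.
Proof. induction x as [|b x IH]. apply tot_ret. rewrite mutate_cons, tot_bind.
  rewrite (E_ext_in _ (fun _ => 1)). unfold tot, E; simpl; ring.
  intros. apply tot_bind1; auto. intros; apply tot_ret. Qed.

Lemma allbits_len n x : In x (allbits n) -> length x = n.
Proof. revert x; induction n as [|n IH]; intros x H. simpl in H. destruct H as [H|[]]. subst; auto.
  simpl in H. apply in_flat_map in H. destruct H as [s [H1 H2]].
  destruct H2 as [H2|[H2|[]]]; subst; simpl; f_equal; auto. Qed.

Lemma allbits_ne n : allbits n <> [].
Proof. induction n; simpl. congruence. destruct (allbits n). congruence. simpl. congruence. Qed.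

Lemma remove_nth_len {A} i (l : list A) : (i < length l)%nat -> length (remove_nth i l) = pred (length l).
Proof. revert i; induction l as [|x l IH]; intros i H; simpl in *. lia.
  destruct i. auto. simpl. rewrite IH by lia. destruct l; simpl in *; lia. Qed.
Lemma remove_nth_perm (i : nat) (l : list bitstring) : (i < length l)%nat ->
  Permutation l (nth i l [] :: remove_nth i l).
Proof. revert i; induction l as [|x l IH]; intros i H; simpl in *. lia.
  destruct i. auto. simpl. eapply perm_trans. apply perm_skip. apply (IH i). lia.
  apply perm_swap. Qed.
Lemma remove_nth_in (i : nat) (l : list bitstring) y : In y (remove_nth i l) -> In y l.
Proof. revert i; induction l as [|x l IH]; intros i H; simpl in *. destruct i; auto.
  destruct i. auto. simpl in H. destruct H; auto. right; eapply IH; eauto. Qed.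

Lemma shuffle_perm f l py : length l = f -> In py (shuffle_aux f l) -> Permutation (snd py) l.
Proof. revert l py; induction f as [|f IH]; intros l py Hl H.
  simpl in H. apply in_ret in H. rewrite H. destruct l; simpl in *; [auto|lia].
  rewrite shuffle_S in H. apply in_bind in H. destruct H as [pi [q [H1 H2]]].
  apply in_uniform in H1. destruct H1 as [H1 _]. apply in_seq in H1.
  apply in_bind in H2. destruct H2 as [pr [q' [H3 H4]]]. apply in_ret in H4. simpl in H4.
  rewrite H4. apply IH in H3. symmetry. eapply perm_trans. apply (remove_nth_perm (snd pi)). lia.
  apply perm_skip. symmetry; auto. rewrite remove_nth_len by lia. lia. Qed.

Lemma nneg_shuffle f l : nneg (shuffle_aux f l).
Proof. revert l; induction f; intros l. apply nneg_ret. rewrite shuffle_S.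
  apply nneg_bind. apply nneg_uniform. intros; apply nneg_bind; auto. intros; apply nneg_ret. Qed.

Lemma tot_shuffle f l : length l = f -> tot (shuffle_aux f l) = 1.
Proof. revert l; induction f as [|f IH]; intros l Hl. apply tot_ret. rewrite shuffle_S.
  apply tot_bind1. apply tot_uniform. destruct l; simpl in *; [lia|congruence].
  intros pi H1. apply in_uniform in H1. destruct H1 as [H1 _]. apply in_seq in H1.
  apply tot_bind1. apply IH. rewrite remove_nth_len by lia. lia.
  intros; apply tot_ret. Qed.

Lemma insert_perm x l : Permutation (insert_desc x l) (x :: l).
Proof. induction l as [|y l IH]; simpl. auto. destruct (Nat.leb _ _). auto.
  eapply perm_trans. apply perm_skip. apply IH. apply perm_swap. Qed.
Lemma sort_perm l : Permutation (sort_desc l) l.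
Proof. induction l; simpl. auto. eapply perm_trans. apply insert_perm. auto. Qed.

Lemma select_in mu off py : In py (select mu off) ->
  exists s, Permutation s off /\ snd py = firstn mu s.
Proof. unfold select, shuffle. intros H. apply in_bind in H. destruct H as [ps [q [H1 H2]]].
  apply in_ret in H2. apply shuffle_perm in H1; auto. exists (sort_desc (snd ps)). split; auto.
  eapply perm_trans. apply sort_perm. auto. Qed.

Lemma nneg_select mu off : nneg (select mu off).
Proof. apply nneg_bind. apply nneg_shuffle. intros; apply nneg_ret. Qed.
Lemma tot_select mu off : tot (select mu off) = 1.
Proof. apply tot_bind1. apply tot_shuffle; auto. intros; apply tot_ret. Qed.

Lemma lsum_perm (w : bitstring -> R) l1 l2 : Permutation l1 l2 -> lsum w l1 = lsum w l2.
Proof. induction 1; unfold lsum in *; simpl; try lra. Qed.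
Lemma lsum_firstn (w : bitstring -> R) k l : (forall x, 0 <= w x) -> lsum w (firstn k l) <= lsum w l.
Proof. intros Hw. revert k; induction l as [|x l IH]; intros k; destruct k; unfold lsum in *; simpl; try lra.
  - pose proof (IH 0%nat). simpl in H. specialize (Hw x). lra.
  - specialize (IH k). lra. Qed.
Lemma lsum_app {A} (w : A -> R) l1 l2 : lsum w (l1 ++ l2) = lsum w l1 + lsum w l2.
Proof. unfold lsum. rewrite map_app, fold_right_app. induction l1; simpl. ring. rewrite IHl1. ring.
  Qed.


Lemma E_bound {A} (f g : A -> R) K d : nneg d -> tot d = 1 ->
  (forall px, In px d -> f (snd px) <= K + g (snd px)) -> E f d <= K + E g d.
Proof. intros H1 H2 H3. eapply Rle_trans. apply (E_mono f (fun x => K + g x)); auto.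
  rewrite E_plus, E_const, H2. lra. Qed.

Lemma lsum_mono {A} (f g : A -> R) l : (forall x, In x l -> f x <= g x) -> lsum f l <= lsum g l.
Proof. induction l; unfold lsum in *; simpl; intros H. lra.
  assert (f a <= g a) by auto. assert (fold_right Rplus 0 (map f l) <= fold_right Rplus 0 (map g l)) by auto. lra. Qed.
Lemma lsum_nneg {A} (f : A -> R) l : (forall x, 0 <= f x) -> 0 <= lsum f l.
Proof. intros H; induction l; unfold lsum in *; simpl. lra. specialize (H a). lra. Qed.
Lemma lsum_plus {A} (f g : A -> R) l : lsum (fun x => f x + g x) l = lsum f l + lsum g l.
Proof. induction l; unfold lsum in *; simpl. ring. rewrite IHl; ring. Qed.
Lemma lsum_scal {A} (f : A -> R) c l : lsum (fun x => c * f x) l = c * lsum f l.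
Proof. induction l; unfold lsum in *; simpl. ring. rewrite IHl; ring. Qed.

Lemma lsum_snoc {A} (f : A -> R) l x : lsum f (l ++ [x]) = lsum f l + f x.
Proof. induction l; unfold lsum in *; simpl. ring. rewrite IHl; ring. Qed.

Section Pot.
Variables (n mu lam : nat) (w : bitstring -> R) (W C0 B : R).
Hypothesis Hn : (1 <= n)%nat.
Hypothesis Hmu : (1 <= mu)%nat.
Hypothesis Hml : (mu <= lam)%nat.
Hypothesis Hw0 : forall x, 0 <= w x.
Hypothesis HW : forall y, length y = n -> is_opt y = true -> W <= w y.
Hypothesis HWpos : 0 < W.
Hypothesis HB : 0 <= B.
Hypothesis HC0 : E w (uniform (allbits n)) <= C0.
Hypothesis Hmut : forall x, length x = n -> INR lam * E w (mutate (/ INR n) x) <= INR mu * (w x + B).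

Definition allnl (l : list bitstring) := forall x, In x l -> length x = n.
Definition M (pop : list bitstring) := E (fun x => E w (mutate (/ INR n) x)) (uniform pop).
Definition D := W / INR lam.

Definition valid (s : state) : Prop :=
  match s with
  | Init pop => (length pop < mu)%nat /\ allnl pop
  | Gen pop off => length pop = mu /\ allnl pop /\ (length off < lam)%nat /\ allnl off
  | Done => False
  end.

Definition hraw (s : state) : R :=
  match s with
  | Init pop => (lsum w pop + INR (length pop) * B) / INR lam
  | Gen pop off => (lsum w off + (INR lam - INR (length off)) * M pop
                    + INR (length off) * (INR mu * B / INR lam)) / INR lam
  | Done => D
  end.

Definition hh (s : state) : R := match s with Done => D | _ => hraw s end.

Definition v (s : state) : R :=
  if excluded_middle_informative (valid s) then Rmax 0 (D - hraw s) else 0.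

Lemma lam_pos : 0 < INR lam.
Proof. apply lt_0_INR; lia. Qed.
Lemma mu_pos : 0 < INR mu.
Proof. apply lt_0_INR; lia. Qed.
Lemma p_range : 0 <= / INR n <= 1.
Proof. assert (1 <= INR n) by (apply (le_INR 1); lia). split.
  left; apply Rinv_0_lt_compat; lra. rewrite <- Rinv_1. apply Rinv_le_contravar; lra. Qed.

Lemma M_nneg pop : 0 <= M pop.
Proof. unfold M. apply E_nneg. apply nneg_uniform. intros. apply E_nneg.
  apply nneg_mutate, p_range. intros; auto. Qed.

Lemma M_bound pop : length pop = mu -> allnl pop -> INR lam * M pop <= lsum w pop + INR mu * B.
Proof. intros Hl Ha. unfold M. rewrite E_uniform, Hl.
  rewrite <- Rmult_assoc, (Rmult_comm (INR lam)), Rmult_assoc.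
  rewrite <- lsum_scal.
  apply Rle_trans with (/ INR mu * lsum (fun x => INR mu * (w x + B)) pop).
  apply Rmult_le_compat_l. left; apply Rinv_0_lt_compat, mu_pos.
  apply lsum_mono. intros; apply Hmut; auto.
  rewrite lsum_scal, lsum_plus, lsum_const, Hl. pose proof mu_pos. field_simplify; lra. Qed.

Lemma E_w_unif_nneg : 0 <= C0.
Proof. eapply Rle_trans; [|apply HC0]. apply E_nneg. apply nneg_uniform. intros; auto. Qed.

Definition cc := (C0 + B) / INR lam.

Lemma step_init pop : valid (Init pop) ->
  E hh (step n mu lam (Init pop)) <= hraw (Init pop) + cc
  /\ (forall ps, In ps (step n mu lam (Init pop)) -> valid (snd ps) \/ snd ps = Done)
  /\ tot (step n mu lam (Init pop)) = 1.
Proof. intros [Hl Ha]. pose proof lam_pos. pose proof mu_pos. simpl step. split; [|split].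
  - unfold cc, hraw.
    apply Rle_trans with ((lsum w pop + INR (length pop) * B + B) / INR lam + / INR lam * E w (uniform (allbits n))).
    2:{ apply Rle_trans with ((lsum w pop + INR (length pop) * B + B) / INR lam + / INR lam * C0).
        apply Rplus_le_compat_l. apply Rmult_le_compat_l; auto. left; apply Rinv_0_lt_compat; lra.
        right; field; lra. }
    rewrite E_bind, <- (E_scal w). apply E_bound. apply nneg_uniform. apply tot_uniform, allbits_ne.
    intros px Hpx. apply in_uniform in Hpx. destruct Hpx as [Hx _].
    pose proof (allbits_len _ _ Hx) as Hxl.
    destruct (is_opt (snd px)) eqn:Ho.
    + rewrite E_ret. simpl. unfold D. pose proof (HW _ Hxl Ho).
      assert (0 <= lsum w pop) by (apply lsum_nneg; auto).
      assert (0 <= INR (length pop)) by apply pos_INR.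
      assert (W / INR lam <= / INR lam * w (snd px)).
      { unfold Rdiv; rewrite Rmult_comm; apply Rmult_le_compat_l; [left; apply Rinv_0_lt_compat; lra| auto]. }
      assert (0 <= (lsum w pop + INR (length pop) * B + B) / INR lam).
      { unfold Rdiv; apply Rmult_le_pos; [nra| left; apply Rinv_0_lt_compat; lra]. }
      lra.
    + destruct (Nat.eqb (length (pop ++ [snd px])) mu) eqn:Hq.
      * rewrite E_ret. simpl. apply Nat.eqb_eq in Hq. rewrite length_app in Hq; simpl in Hq.
        assert (Hb := M_bound (pop ++ [snd px])). rewrite length_app in Hb; simpl in Hb.
        specialize (Hb Hq). 
        assert (allnl (pop ++ [snd px])). { intros y Hy. apply in_app_or in Hy. destruct Hy as [Hy|[Hy|[]]]; auto. subst; auto. }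
        specialize (Hb H1). rewrite lsum_snoc in Hb.
        rewrite <- Hq, plus_INR in Hb. replace (INR 1) with 1 in Hb by reflexivity.
        apply Rle_trans with (M (pop ++ [snd px])). right. replace (lsum w []) with 0 by reflexivity. field; lra.
        apply (Rmult_le_reg_l (INR lam)); auto.
        apply Rle_trans with (lsum w pop + w (snd px) + (INR (length pop) + 1) * B). lra.
        right; field; lra.
      * rewrite E_ret. simpl. rewrite length_app. simpl. rewrite lsum_snoc.
        rewrite Nat.add_1_r, S_INR. right; field; lra.
  - intros ps Hps. apply in_bind in Hps. destruct Hps as [px [q [H1 H2]]].
    apply in_uniform in H1. destruct H1 as [Hx _]. pose proof (allbits_len _ _ Hx) as Hxl.
    assert (allnl (pop ++ [snd px])). { intros y Hy. apply in_app_or in Hy. destruct Hy as [Hy|[Hy|[]]]; auto. subst; auto. }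
    destruct (is_opt (snd px)). apply in_ret in H2; auto.
    destruct (Nat.eqb (length (pop ++ [snd px])) mu) eqn:Hq; apply in_ret in H2; simpl in H2; rewrite H2; left; simpl.
    apply Nat.eqb_eq in Hq. repeat split; auto. lia. intros y [].
    apply Nat.eqb_neq in Hq. rewrite length_app in *; simpl in *. split; auto. lia.
  - apply tot_bind1. apply tot_uniform, allbits_ne. intros px _.
    destruct (is_opt _); [apply tot_ret|]. destruct (Nat.eqb _ _); apply tot_ret.
Qed.

Lemma select_props off' ps : In ps (select mu off') -> length off' = lam -> allnl off' ->
  length (snd ps) = mu /\ allnl (snd ps) /\ lsum w (snd ps) <= lsum w off'.
Proof. intros H Hl Ha. apply select_in in H. destruct H as [s0 [Hp Hs]]. rewrite Hs.
  split; [|split].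
  - rewrite length_firstn. rewrite (Permutation_length Hp). lia.
  - intros x Hx. apply Ha. eapply Permutation_in. apply Hp.
    rewrite <- (firstn_skipn mu s0). apply in_or_app; auto.
  - rewrite <- (lsum_perm w _ _ Hp). apply lsum_firstn; auto.
Qed.

Lemma step_gen pop off : valid (Gen pop off) ->
  E hh (step n mu lam (Gen pop off)) <= hraw (Gen pop off) + cc
  /\ (forall ps, In ps (step n mu lam (Gen pop off)) -> valid (snd ps) \/ snd ps = Done)
  /\ tot (step n mu lam (Gen pop off)) = 1.
Proof. intros [Hl [Ha [Ho Hoa]]]. pose proof lam_pos. pose proof mu_pos.
  assert (Hlm : INR mu <= INR lam) by (apply le_INR; lia).
  assert (Hoff : INR (length off) + 1 <= INR lam).
  { rewrite <- S_INR. apply le_INR. lia. }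
  pose proof (M_nneg pop) as HM.
  assert (Hsum : 0 <= lsum w off) by (apply lsum_nneg; auto).
  assert (Hpop : pop <> []) by (intros ->; simpl in Hl; lia).
  assert (Hli : 0 < / INR lam) by (apply Rinv_0_lt_compat; lra).
  set (K := (lsum w off + (INR lam - INR (length off) - 1) * M pop
              + (INR (length off) + 1) * (INR mu * B / INR lam)) / INR lam).
  assert (HK : 0 <= K).
  { unfold K. unfold Rdiv. apply Rmult_le_pos; [|lra].
    assert (0 <= INR mu * B * / INR lam) by (apply Rmult_le_pos; [apply Rmult_le_pos; lra|lra]).
    assert (0 <= (INR lam - INR (length off) - 1) * M pop) by (apply Rmult_le_pos; lra).
    assert (0 <= (INR (length off) + 1) * (INR mu * B * / INR lam)).
    { apply Rmult_le_pos; auto. pose proof (pos_INR (length off)); lra. }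
    lra. }
  simpl step. split; [|split].
  - apply Rle_trans with (K + / INR lam * M pop).
    + rewrite E_bind. unfold M. rewrite <- E_scal. apply E_bound. apply nneg_uniform. apply tot_uniform; auto.
      intros px Hpx. apply in_uniform in Hpx. destruct Hpx as [Hpar _].
      pose proof (Ha _ Hpar) as Hparl.
      rewrite E_bind, <- E_scal. apply E_bound. apply nneg_mutate, p_range. apply tot_mutate.
      intros py Hpy. pose proof (mutate_len _ _ _ Hpy) as Hyl. rewrite Hparl in Hyl.
      destruct (is_opt (snd py)) eqn:Hopt.
      * rewrite E_ret. simpl. unfold D.
        assert (W / INR lam <= / INR lam * w (snd py)).
        { unfold Rdiv; rewrite Rmult_comm; apply Rmult_le_compat_l; [lra| apply HW; auto]. }
        lra.
      * destruct (Nat.eqb (length (off ++ [snd py])) lam) eqn:Hq.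
        -- apply Nat.eqb_eq in Hq. rewrite length_app in Hq; simpl in Hq.
           assert (Hoa' : allnl (off ++ [snd py])).
           { intros y Hy. apply in_app_or in Hy. destruct Hy as [Hy|[Hy|[]]]; auto. subst; auto. }
           rewrite E_bind.
           apply Rle_trans with (E (fun _ => (lsum w (off ++ [snd py]) + INR mu * B) / INR lam)
                                   (select mu (off ++ [snd py]))).
           ++ apply E_mono. apply nneg_select. intros ps Hps.
              destruct (select_props _ _ Hps) as [HP1 [HP2 HP3]].
              rewrite length_app; simpl; lia. auto.
              rewrite E_ret. simpl. replace (lsum w []) with 0 by reflexivity.
              pose proof (M_bound _ HP1 HP2).
              apply Rle_trans with (M (snd ps)). right; field; lra.
              apply (Rmult_le_reg_l (INR lam)); auto.
              apply Rle_trans with (lsum w (off ++ [snd py]) + INR mu * B). lra. right; field; lra.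
           ++ rewrite E_const, tot_select, lsum_snoc. unfold K.
              assert (INR (length off) + 1 = INR lam).
              { rewrite <- S_INR. f_equal. lia. }
              rewrite H1. replace (INR lam - INR (length off) - 1) with 0 by lra. right. field. lra.
        -- rewrite E_ret. simpl. rewrite length_app, lsum_snoc. simpl length.
           rewrite Nat.add_1_r, S_INR. unfold K. right. field. lra.
    + unfold cc, hraw.
      assert (INR mu * B / INR lam <= B).
      { apply (Rmult_le_reg_l (INR lam)); auto. field_simplify; try lra. nra. }
      assert (0 <= C0) by apply E_w_unif_nneg.
      unfold K. apply Rle_trans with ((lsum w off + (INR lam - INR (length off)) * M pop +
        INR (length off) * (INR mu * B / INR lam)) / INR lam + (INR mu * B / INR lam) / INR lam).
      right. field. lra.
      apply Rplus_le_compat_l. unfold Rdiv at 2. apply Rmult_le_compat_r; lra.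
  - intros ps Hps. apply in_bind in Hps. destruct Hps as [px [q [H1 H2]]].
    apply in_uniform in H1. destruct H1 as [Hpar _]. pose proof (Ha _ Hpar) as Hparl.
    apply in_bind in H2. destruct H2 as [py [q' [H3 H4]]].
    pose proof (mutate_len _ _ _ H3) as Hyl. rewrite Hparl in Hyl.
    assert (Hoa' : allnl (off ++ [snd py])).
    { intros y Hy. apply in_app_or in Hy. destruct Hy as [Hy|[Hy|[]]]; auto. subst; auto. }
    destruct (is_opt (snd py)). apply in_ret in H4; auto.
    destruct (Nat.eqb (length (off ++ [snd py])) lam) eqn:Hq.
    + apply Nat.eqb_eq in Hq. apply in_bind in H4. destruct H4 as [pP [q2 [H5 H6]]].
      apply in_ret in H6. simpl in H6. rewrite H6. left.
      destruct (select_props _ _ H5) as [HP1 [HP2 HP3]]; auto.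
      simpl. repeat split; auto. lia. intros y [].
    + apply in_ret in H4; simpl in H4; rewrite H4; left; simpl.
      apply Nat.eqb_neq in Hq. rewrite length_app in *; simpl in *. repeat split; auto. lia.
  - apply tot_bind1. apply tot_uniform; auto. intros px _.
    apply tot_bind1. apply tot_mutate. intros py _.
    destruct (is_opt _); [apply tot_ret|]. destruct (Nat.eqb _ _); [|apply tot_ret].
    apply tot_bind1. apply tot_select. intros; apply tot_ret.
Qed.

Lemma nneg_step s : nneg (step n mu lam s).
Proof. destruct s; simpl.
  - apply nneg_bind. apply nneg_uniform. intros. destruct (is_opt _). apply nneg_ret.
    destruct (Nat.eqb _ _); apply nneg_ret.
  - apply nneg_bind. apply nneg_uniform. intros. apply nneg_bind. apply nneg_mutate, p_range.
    intros. destruct (is_opt _). apply nneg_ret. destruct (Nat.eqb _ _); [|apply nneg_ret].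
    apply nneg_bind. apply nneg_select. intros; apply nneg_ret.
  - apply nneg_ret.
Qed.

Lemma tot_step_le s : tot (step n mu lam s) <= 1.
Proof. destruct s; simpl.
  - apply tot_bind_le. apply nneg_uniform. apply tot_uniform_le. intros. destruct (is_opt _). rewrite tot_ret; lra.
    destruct (Nat.eqb _ _); rewrite tot_ret; lra.
  - apply tot_bind_le. apply nneg_uniform. apply tot_uniform_le. intros. apply tot_bind_le.
    apply nneg_mutate, p_range. rewrite tot_mutate; lra.
    intros. destruct (is_opt _). rewrite tot_ret; lra. destruct (Nat.eqb _ _); [|rewrite tot_ret; lra].
    rewrite tot_bind1. lra. apply tot_select. intros; apply tot_ret.
  - rewrite tot_ret; lra.
Qed.

Lemma D_pos : 0 < D.
Proof. unfold D. pose proof lam_pos. unfold Rdiv. apply Rmult_lt_0_compat; auto. apply Rinv_0_lt_compat; auto. Qed.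

Lemma cc_nneg : 0 <= cc.
Proof. unfold cc. pose proof E_w_unif_nneg. pose proof lam_pos. unfold Rdiv.
  apply Rmult_le_pos. lra. left; apply Rinv_0_lt_compat; auto. Qed.

Lemma v_nneg s : 0 <= v s.
Proof. unfold v. destruct (excluded_middle_informative _). apply Rmax_l. lra. Qed.

Lemma hraw_nneg s : valid s -> 0 <= hraw s.
Proof. pose proof lam_pos. intros Hv. destruct s; simpl in *.
  - unfold Rdiv. apply Rmult_le_pos; [|left; apply Rinv_0_lt_compat; auto].
    pose proof (lsum_nneg w pop Hw0). pose proof (pos_INR (length pop)). nra.
  - destruct Hv as [_ [_ [Ho _]]].
    assert (INR (length off) <= INR lam) by (apply le_INR; lia).
    pose proof (lsum_nneg w off Hw0). pose proof (pos_INR (length off)). pose proof (M_nneg pop).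
    pose proof mu_pos.
    assert (0 <= INR mu * B / INR lam).
    { unfold Rdiv. apply Rmult_le_pos. nra. left; apply Rinv_0_lt_compat; auto. }
    unfold Rdiv at 2. apply Rmult_le_pos; [|left; apply Rinv_0_lt_compat; auto].
    assert (0 <= (INR lam - INR (length off)) * M pop) by (apply Rmult_le_pos; lra).
    assert (0 <= INR (length off) * (INR mu * B / INR lam)) by (apply Rmult_le_pos; lra).
    lra.
  - destruct Hv.
Qed.

Lemma v_le s : v s <= D * (if not_done s then 1 else 0).
Proof. pose proof D_pos. unfold v. destruct (excluded_middle_informative (valid s)) as [Hv|Hv].
  - pose proof (hraw_nneg s Hv). destruct s; simpl in *; try destruct Hv.
    all: apply Rmax_lub; lra.
  - destruct (not_done s); lra.
Qed.

Lemma step_v s : E v (step n mu lam s) >= v s - cc.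
Proof. pose proof cc_nneg. pose proof D_pos.
  assert (HE0 : 0 <= E v (step n mu lam s)).
  { apply E_nneg. apply nneg_step. intros; apply v_nneg. }
  unfold v at 2. destruct (excluded_middle_informative (valid s)) as [Hv|Hv]; [|lra].
  assert (Hst : E hh (step n mu lam s) <= hraw s + cc
      /\ (forall ps, In ps (step n mu lam s) -> valid (snd ps) \/ snd ps = Done)
      /\ tot (step n mu lam s) = 1).
  { destruct s. apply step_init; auto. apply step_gen; auto. destruct Hv. }
  destruct Hst as [H1 [H2 H3]].
  assert (H4 : E (fun s' => D - hh s') (step n mu lam s) <= E v (step n mu lam s)).
  { apply E_mono. apply nneg_step. intros ps Hps. destruct (H2 _ Hps) as [Hv'|Hd].
    - unfold v. destruct (excluded_middle_informative (valid (snd ps))); [|contradiction].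
      destruct (snd ps); simpl; try apply Rmax_r; destruct Hv'.
    - rewrite Hd. simpl. pose proof (v_nneg Done). lra. }
  replace (E (fun s' => D - hh s') (step n mu lam s)) with (D * tot (step n mu lam s) - E hh (step n mu lam s)) in H4.
  2:{ rewrite <- E_const. replace (fun s' => D - hh s') with (fun s' => D + (-1) * hh s') by (apply functional_extensionality; intros; ring).
      rewrite E_plus, E_scal. ring. }
  rewrite H3 in H4. assert (Rmax 0 (D - hraw s) <= E v (step n mu lam s) + cc) by (apply Rmax_lub; lra). lra.
Qed.

Lemma state_after_S k : state_after n mu lam (S k) = bind (state_after n mu lam k) (step n mu lam).
Proof. reflexivity. Qed.

Lemma state_props k : nneg (state_after n mu lam k) /\ tot (state_after n mu lam k) <= 1
  /\ E v (state_after n mu lam k) >= D - INR k * cc.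
Proof. induction k as [|k IH].
  - simpl. split. apply nneg_ret. split. rewrite tot_ret; lra. rewrite E_ret.
    unfold v. destruct (excluded_middle_informative _) as [Hv|Hv].
    + simpl hraw. simpl length. unfold lsum; simpl.
      pose proof D_pos. replace ((0 + 0 * B) / INR lam) with 0. rewrite Rmax_right. simpl; lra. lra.
      field. pose proof lam_pos; lra.
    + exfalso. apply Hv. simpl. split. lia. intros x [].
  - destruct IH as [H1 [H2 H3]]. rewrite state_after_S. split; [|split].
    + apply nneg_bind; auto. intros; apply nneg_step.
    + apply tot_bind_le; auto. intros; apply tot_step_le.
    + rewrite E_bind. pose proof cc_nneg.
      assert (E (fun s => v s - cc) (state_after n mu lam k) <= E (fun x => E v (step n mu lam x)) (state_after n mu lam k)).
      { apply E_mono; auto. intros. pose proof (step_v (snd px)). lra. }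
      replace (E (fun s => v s - cc) (state_after n mu lam k)) with (E v (state_after n mu lam k) - cc * tot (state_after n mu lam k)) in H0.
      2:{ rewrite <- E_const. replace (fun s => v s - cc) with (fun s => v s + (-1) * cc) by (apply functional_extensionality; intros; ring).
          rewrite E_plus, E_scal. ring. }
      rewrite S_INR.
      assert (cc * tot (state_after n mu lam k) <= cc * 1) by (apply Rmult_le_compat_l; auto).
      lra.
Qed.

Lemma tail_bound k : runtime_tail n mu lam k >= 1 - INR k * (C0 + B) / W.
Proof. destruct (state_props k) as [H1 [H2 H3]]. unfold runtime_tail. rewrite mass_E.
  assert (E v (state_after n mu lam k) <= D * E (fun x => if not_done x then 1 else 0) (state_after n mu lam k)).
  { rewrite <- E_scal. apply E_mono; auto. intros; apply v_le. }
  pose proof D_pos. pose proof lam_pos.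
  assert (HD : INR k * cc / D = INR k * (C0 + B) / W). { unfold cc, D. field. lra. }
  apply Rle_ge. rewrite <- HD.
  apply (Rmult_le_reg_l D); auto. replace (D * (1 - INR k * cc / D)) with (D - INR k * cc) by (field; lra).
  lra.
Qed.
End Pot.


Definition nz (x : bitstring) : nat := length (filter negb x).
Lemma onemax_cons b x : onemax (b :: x) = ((if b then 1 else 0) + onemax x)%nat.
Proof. unfold onemax; simpl. destruct b; reflexivity. Qed.
Lemma nz_cons b x : nz (b :: x) = ((if b then 0 else 1) + nz x)%nat.
Proof. unfold nz; simpl. destruct b; reflexivity. Qed.
Lemma onemax_nz x : (onemax x + nz x)%nat = length x.
Proof. induction x as [|b x IH]. reflexivity. rewrite onemax_cons, nz_cons. simpl. destruct b; lia. Qed.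

Lemma E_mut_pow y p x : E (fun z => y ^ onemax z) (mutate p x) =
  ((1 - p) * y + p) ^ (onemax x) * ((1 - p) + p * y) ^ (nz x).
Proof. induction x as [|b x IH]. unfold E; simpl. unfold onemax, nz; simpl; ring.
  rewrite mutate_cons, E_bind. rewrite !E_cons, E_nil. simpl fst; simpl snd.
  assert (Hb : forall b', E (fun y' => E (fun z => y ^ onemax z) (ret (b' :: y'))) (mutate p x)
     = y ^ (if b' then 1 else 0) * E (fun z => y ^ onemax z) (mutate p x)).
  { intros b'. rewrite <- E_scal. apply E_ext_in. intros. rewrite E_ret, onemax_cons, pow_add. reflexivity. }
  rewrite !E_bind, !Hb, IH, onemax_cons, nz_cons. destruct b; simpl; ring. Qed.

Lemma lsum_allbits y n : lsum (fun z => y ^ onemax z) (allbits n) = (1 + y) ^ n.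
Proof. induction n as [|n IH]. unfold lsum; simpl. unfold onemax; simpl. ring.
  simpl allbits. simpl pow. rewrite <- IH. generalize (allbits n). intros l. induction l as [|x l IHl].
  unfold lsum; simpl; ring. simpl. unfold lsum in *; simpl. rewrite IHl.
  rewrite !onemax_cons. simpl. fold (onemax x). ring. Qed.

Lemma allbits_length n : length (allbits n) = (2 ^ n)%nat.
Proof. induction n as [|n IH]. reflexivity. simpl allbits.
  rewrite Nat.pow_succ_r'. rewrite <- IH. generalize (allbits n). intros l. induction l; simpl. lia.
  rewrite IHl. lia. Qed.

Lemma E_unif_pow y n : E (fun z => y ^ onemax z) (uniform (allbits n)) = ((1 + y) / 2) ^ n.
Proof. rewrite E_uniform, lsum_allbits, allbits_length, pow_INR. simpl INR.
  unfold Rdiv. rewrite Rpow_mult_distr, pow_inv. replace (1+1) with 2 by ring. ring. Qed.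

Lemma is_opt_onemax y : is_opt y = true -> onemax y = length y.
Proof. induction y as [|b y IH]. reflexivity. simpl. intros H. apply andb_prop in H. destruct H as [-> H].
  rewrite onemax_cons. simpl. f_equal. auto. Qed.

Lemma exp_mono a b : a <= b -> exp a <= exp b.
Proof. intros [H|H]. left; apply exp_increasing; auto. subst; lra. Qed.
Lemma exp_pow a k : exp a ^ k = exp (INR k * a).
Proof. induction k as [|k IH]. simpl. rewrite Rmult_0_l, exp_0. reflexivity.
  simpl pow. rewrite IH, <- exp_plus, S_INR. f_equal. ring. Qed.
Lemma pow_exp_ln y k : 0 < y -> y ^ k = exp (INR k * ln y).
Proof. intros Hy. rewrite <- exp_pow, exp_ln; auto. Qed.

Section Mut.
Variables (n mu lam : nat) (y dl eps : R).
Hypothesis Hn : (1 <= n)%nat.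
Hypothesis Hmu : (1 <= mu)%nat.
Hypothesis Hy : 1 < y.
Hypothesis Hdl : 0 < dl.
Hypothesis Heps : 0 < eps < 1.
Hypothesis H1 : / y + y * dl <= eps.
Hypothesis H2 : y <= INR n * ln y.
Hypothesis Hlam : INR lam <= (1 - eps) * exp 1 * INR mu.

Definition Bc := exp 1 * exp (ln y * (INR n - dl * INR n) + y * dl).

Lemma core_bound i j : (i + j)%nat = n ->
  (1 - eps) * exp 1 * (((1 - / INR n) * y + / INR n) ^ i * ((1 - / INR n) + / INR n * y) ^ j)
  <= y ^ i + Bc.
Proof. intros Hij.
  assert (Hni : 1 <= INR n) by (apply (le_INR 1); lia).
  set (ni := INR n) in *. set (p := / ni).
  assert (Hp : 0 < p <= 1). { split. apply Rinv_0_lt_compat; lra. unfold p. rewrite <- Rinv_1. apply Rinv_le_contravar; lra. }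
  assert (Hpn : p * ni = 1) by (unfold p; field; lra).
  assert (Hrij : INR i + INR j = ni) by (unfold ni; rewrite <- plus_INR, Hij; reflexivity).
  assert (Hyi : 0 < / y < 1). { split. apply Rinv_0_lt_compat; lra. rewrite <- Rinv_1. apply Rinv_lt_contravar; lra. }
  assert (Hlny : 0 < ln y). { rewrite <- ln_1. apply ln_increasing; lra. }
  pose proof (pos_INR i) as Hi0. pose proof (pos_INR j) as Hj0.
  set (A := (1 - p) * y + p). set (Bb := (1 - p) + p * y).
  assert (HA0 : 0 <= A) by (unfold A; nra).
  assert (HB0 : 0 <= Bb) by (unfold Bb; nra).
  assert (HA : A <= y * exp (- p * (1 - / y))).
  { unfold A. pose proof (exp_ineq1_le (- p * (1 - / y))).
    replace ((1 - p) * y + p) with (y * (1 + - p * (1 - / y))) by (field; lra).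
    apply Rmult_le_compat_l; lra. }
  assert (HBb : Bb <= exp (p * (y - 1))).
  { unfold Bb. pose proof (exp_ineq1_le (p * (y - 1))). lra. }
  assert (HAi : A ^ i <= y ^ i * exp (INR i * (- p * (1 - / y)))).
  { rewrite <- exp_pow, <- Rpow_mult_distr. apply pow_incr. split; auto. }
  assert (HBj : Bb ^ j <= exp (INR j * (p * (y - 1)))).
  { rewrite <- exp_pow. apply pow_incr. split; auto. }
  assert (Hyi0 : 0 < y ^ i) by (apply pow_lt; lra).
  assert (He : 0 < exp 1) by apply exp_pos.
  assert (HBc : 0 <= Bc) by (unfold Bc; left; apply Rmult_lt_0_compat; apply exp_pos).
  assert (Hprod : A ^ i * Bb ^ j <= y ^ i * exp (INR i * (- p * (1 - / y)) + INR j * (p * (y - 1)))).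
  { rewrite exp_plus, <- Rmult_assoc. apply Rmult_le_compat; auto. apply pow_le; auto. apply pow_le; auto. }
  assert (Hepsb : (1 - eps) * exp eps <= 1).
  { pose proof (exp_ineq1_le (- eps)). rewrite exp_Ropp in H. 
    pose proof (exp_pos eps). apply (Rmult_le_reg_r (/ exp eps)). apply Rinv_0_lt_compat; auto.
    rewrite Rmult_assoc, Rinv_r, Rmult_1_r, Rmult_1_l; lra. }
  destruct (Rle_lt_dec (INR j) (dl * ni)) as [Hj|Hj].
  -
    assert (Ht : INR i * (- p * (1 - / y)) + INR j * (p * (y - 1)) <= -1 + eps).
    { replace (INR i) with (ni - INR j) by lra.
      assert (HjP : INR j * p <= dl). { apply (Rmult_le_reg_r ni). lra. rewrite Rmult_assoc, Hpn. lra. }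
      assert (0 <= y - / y) by lra.
      replace ((ni - INR j) * (- p * (1 - / y)) + INR j * (p * (y - 1))) with
        (- (p * ni) * (1 - / y) + (INR j * p) * (y - / y)) by ring.
      rewrite Hpn. assert (INR j * p * (y - / y) <= dl * (y - / y)) by (apply Rmult_le_compat_r; auto).
      assert (dl * (y - / y) <= dl * y) by nra. lra. }
    apply Rle_trans with (y ^ i); [|lra].
    apply Rle_trans with ((1 - eps) * exp 1 * (y ^ i * exp (-1 + eps))).
    apply Rmult_le_compat_l. apply Rmult_le_pos; lra.
    eapply Rle_trans. apply Hprod. apply Rmult_le_compat_l. lra. apply exp_mono; auto.
    replace ((1 - eps) * exp 1 * (y ^ i * exp (-1 + eps))) with (((1 - eps) * exp eps) * y ^ i).
    2:{ replace (-1 + eps) with (eps + - (1)) by ring. rewrite exp_plus, exp_Ropp. field. lra. }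
    nra.
  -
    apply Rle_trans with Bc; [|lra]. unfold Bc.
    apply Rle_trans with (exp 1 * (A ^ i * Bb ^ j)).
    { apply Rmult_le_compat_r. apply Rmult_le_pos; apply pow_le; auto. nra. }
    apply Rmult_le_compat_l; [lra|].
    assert (HA' : A <= y) by (unfold A; nra).
    apply Rle_trans with (y ^ i * exp (INR j * (p * (y - 1)))).
    { apply Rmult_le_compat; auto. apply pow_le; auto. apply pow_le; auto. apply pow_incr; lra. }
    rewrite (pow_exp_ln y i) by lra. rewrite <- exp_plus. apply exp_mono.
    replace (INR i) with (ni - INR j) by lra.
    assert (Hy2 : y * p <= ln y). { apply (Rmult_le_reg_r ni). lra. rewrite Rmult_assoc, Hpn. lra. }
    assert ((INR j - dl * ni) * (ln y - y * p) >= 0). { apply Rle_ge, Rmult_le_pos; lra. }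
    assert (HjP2 : dl * ni * y * p = dl * y) by (transitivity (dl * y * (p * ni)); [ring|rewrite Hpn; ring]).
    assert (0 <= INR j * p) by (apply Rmult_le_pos; lra). change (INR n) with ni. nra.
Qed.

Hypothesis Hml : (mu <= lam)%nat.
Hypothesis Hy2 : 2 <= y.
Hypothesis Hyd : y * dl <= 1.

Lemma tail_inst k : runtime_tail n mu lam k >=
  1 - INR k * ((3/4) ^ n + 9 * exp (- (ln y * dl * INR n))).
Proof.
  assert (Hmut : forall x, length x = n -> INR lam * E (fun z => y ^ onemax z) (mutate (/ INR n) x)
                     <= INR mu * (y ^ onemax x + Bc)).
  { intros x Hx. rewrite E_mut_pow.
    pose proof (core_bound (onemax x) (nz x)) as Hc. rewrite onemax_nz, Hx in Hc. specialize (Hc eq_refl).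
    assert (Hni : 1 <= INR n) by (apply (le_INR 1); lia).
    assert (Hp : 0 <= / INR n <= 1). { split. left; apply Rinv_0_lt_compat; lra. rewrite <- Rinv_1. apply Rinv_le_contravar; lra. }
    set (X := ((1 - / INR n) * y + / INR n) ^ onemax x * (1 - / INR n + / INR n * y) ^ nz x) in *.
    assert (0 <= X). { unfold X. apply Rmult_le_pos; apply pow_le; nra. }
    assert (0 < INR mu) by (apply lt_0_INR; lia).
    apply Rle_trans with ((1 - eps) * exp 1 * INR mu * X). apply Rmult_le_compat_r; auto.
    replace ((1 - eps) * exp 1 * INR mu * X) with (INR mu * ((1 - eps) * exp 1 * X)) by ring.
    apply Rmult_le_compat_l; lra. }
  assert (HW : 0 < y ^ n) by (apply pow_lt; lra).
  pose proof (tail_bound n mu lam (fun z => y ^ onemax z) (y ^ n) (((1 + y) / 2) ^ n) Bc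
    Hn Hmu Hml) as T.
  assert (Hlny : 0 < ln y). { rewrite <- ln_1. apply ln_increasing; lra. }
  assert (HBc : 0 <= Bc) by (unfold Bc; left; apply Rmult_lt_0_compat; apply exp_pos).
  specialize (T (fun x => pow_le y (onemax x) ltac:(lra))).
  assert (T2 : forall k, runtime_tail n mu lam k >= 1 - INR k * (((1 + y) / 2) ^ n + Bc) / y ^ n).
  { apply T; auto.
    - intros z Hz Ho. rewrite is_opt_onemax, Hz; auto. lra.
    - rewrite E_unif_pow. lra. }
  specialize (T2 k).
  assert (Hr : (((1 + y) / 2) ^ n + Bc) / y ^ n <= (3/4) ^ n + 9 * exp (- (ln y * dl * INR n))).
  { unfold Rdiv. rewrite Rmult_plus_distr_r. apply Rplus_le_compat.
    - rewrite <- pow_inv, <- Rpow_mult_distr. apply pow_incr. split.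
      apply Rmult_le_pos. lra. left; apply Rinv_0_lt_compat; lra.
      apply (Rmult_le_reg_r y). lra. rewrite Rmult_assoc, Rinv_l by lra. lra.
    - unfold Bc. rewrite (pow_exp_ln y n) by lra. rewrite <- exp_Ropp.
      rewrite Rmult_assoc, <- exp_plus.
      apply Rle_trans with (exp 1 * exp (1 + - (ln y * dl * INR n))).
      apply Rmult_le_compat_l. left; apply exp_pos. apply exp_mono. lra.
      rewrite exp_plus, <- Rmult_assoc. apply Rmult_le_compat_r. left; apply exp_pos.
      pose proof exp_le_3. assert (0 < exp 1) by apply exp_pos. nra. }
  pose proof (pos_INR k). 
  assert (INR k * ((((1 + y) / 2) ^ n + Bc) / y ^ n) <= INR k * ((3/4) ^ n + 9 * exp (- (ln y * dl * INR n)))).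
  { apply Rmult_le_compat_l; auto. }
  unfold Rdiv in T2. rewrite Rmult_assoc in T2. unfold Rdiv in H0. lra.
Qed.
End Mut.


Lemma sum_seq_ge (f : nat -> R) c s K : (forall k, (k < s + K)%nat -> f k >= c) ->
  fold_right Rplus 0 (map f (seq s K)) >= INR K * c.
Proof. revert s; induction K as [|K IH]; intros s H. simpl; lra.
  simpl seq. simpl map. simpl fold_right. rewrite S_INR.
  assert (f s >= c) by (apply H; lia). assert (fold_right Rplus 0 (map f (seq (S s) K)) >= INR K * c).
  { apply IH. intros; apply H; lia. } lra. Qed.

Lemma floor_ex X : 0 <= X -> exists K : nat, INR K <= X < INR K + 1.
Proof. intros HX. destruct (INR_unbounded X) as [N HN].
  assert (forall N, X < INR N -> exists K : nat, INR K <= X < INR K + 1).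
  { clear HN N. induction N as [|N IH]; intros H. simpl in H; lra.
    destruct (Rlt_le_dec X (INR N)). auto. exists N. rewrite S_INR in H. lra. }
  apply (H N). lra. Qed.

Lemma runtime_from_tail n mu lam r : 0 < r ->
  (forall k, runtime_tail n mu lam k >= 1 - INR k * r) ->
  expected_runtime_ge n mu lam (/ (4 * r) - 1 / 2).
Proof. intros Hr H. assert (0 <= / (2 * r)) by (left; apply Rinv_0_lt_compat; lra).
  destruct (floor_ex _ H0) as [K [HK1 HK2]]. exists K.
  assert (HKr : INR K * r <= 1/2).
  { apply Rle_trans with (/ (2 * r) * r). apply Rmult_le_compat_r; lra. right; field; lra. }
  apply Rge_trans with (INR K * (1/2)).
  apply sum_seq_ge. intros k Hk. simpl in Hk.
  assert (INR k <= INR K) by (apply le_INR; lia). specialize (H k).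
  assert (INR k * r <= INR K * r) by (apply Rmult_le_compat_r; lra). lra.
  replace (/ (4 * r)) with (/ (2 * r) * (1/2)) by (field; lra). lra. Qed.

Lemma ert_mono n mu lam B1 B2 : B2 <= B1 -> expected_runtime_ge n mu lam B1 -> expected_runtime_ge n mu lam B2.
Proof. intros H [K HK]. exists K. lra. Qed.

Lemma exp_ge_pow x m : 0 <= x -> (1 <= m)%nat -> (x / INR m) ^ m <= exp x.
Proof. intros Hx Hm. assert (0 < INR m) by (apply lt_0_INR; lia).
  replace (exp x) with (exp (x / INR m) ^ m).
  apply pow_incr. split. unfold Rdiv; apply Rmult_le_pos; [lra|left; apply Rinv_0_lt_compat; lra].
  pose proof (exp_ineq1_le (x / INR m)). lra.
  rewrite exp_pow. f_equal. field. lra. Qed.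

Lemma pow34 n : (3/4) ^ n <= exp (- (INR n / 4)).
Proof. replace (- (INR n / 4)) with (INR n * (- (1/4))) by field. rewrite <- exp_pow.
  apply pow_incr. pose proof (exp_ineq1_le (- (1/4))). lra. Qed.

Lemma ln_ge_half y : 2 <= y -> / 2 < ln y.
Proof. intros Hy. pose proof ln_lt_2. destruct (Req_dec y 2). subst; auto.
  assert (ln 2 < ln y) by (apply ln_increasing; lra). lra. Qed.

Lemma final_bound n mu lam r z : 0 < r -> 41 <= z -> r <= 10 * / (z * z) ->
  expected_runtime_ge n mu lam (/ (4 * r) - 1 / 2) -> expected_runtime_ge n mu lam z.
Proof. intros Hr Hz Hrz H. apply (ert_mono _ _ _ (/ (4 * r) - 1 / 2)); auto.
  assert (0 < z * z) by nra.
  assert (/ (40 * / (z * z)) <= / (4 * r)).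
  { apply Rinv_le_contravar. lra. lra. }
  replace (/ (40 * / (z * z))) with (z * z / 40) in H1 by (field; lra).
  nra. Qed.

Lemma part1 (mu lam : nat -> nat)
    (Hmu : forall n, (0 < mu n)%nat)
    (Hmulam : forall n, (mu n <= lam n)%nat) :
  (exists eps : R, 0 < eps < 1 /\
      forall n, INR (lam n) <= (1 - eps) * exp 1 * INR (mu n)) ->
   exists c : R, 0 < c /\ exists n0 : nat, forall n : nat, (n0 <= n)%nat ->
     expected_runtime_ge n (mu n) (lam n) (exp (c * INR n)).
Proof. intros [eps [Heps Hlam]].
  set (g := eps * eps / 8).
  assert (Hg : 0 < g) by (unfold g; nra).
  exists (g / 2). split. lra.
  destruct (INR_unbounded (640 / (eps * eps))) as [n0 Hn0]. exists n0. intros n Hn.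
  assert (Hee : 0 < eps * eps) by nra.
  assert (HnR : INR n >= 640 / (eps * eps)). { assert (INR n0 <= INR n) by (apply le_INR; auto). lra. }
  assert (H640 : 640 <= 640 / (eps * eps)).
  { apply (Rmult_le_reg_r (eps * eps)); auto. unfold Rdiv. rewrite Rmult_assoc, Rinv_l by lra. nra. }
  assert (Hn1 : (1 <= n)%nat). { destruct n. simpl in HnR. lra. lia. }
  set (y := 2 / eps). set (dl := eps * eps / 4).
  assert (Hy2 : 2 <= y). { unfold y. apply (Rmult_le_reg_r eps). lra. unfold Rdiv. rewrite Rmult_assoc, Rinv_l by lra. nra. }
  assert (Hlny := ln_ge_half y Hy2).
  assert (Hyeps : y * eps = 2) by (unfold y; field; lra).
  assert (Hydl : y * dl = eps / 2) by (unfold dl, y; field; lra).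
  assert (Hiy : / y = eps / 2) by (unfold y; field; lra).
  assert (HnY : y <= INR n * ln y).
  { assert (4 / eps <= INR n).
    { apply Rle_trans with (640 / (eps * eps)); [|lra].
      apply (Rmult_le_reg_r (eps * eps)); auto.
      replace (4 / eps * (eps * eps)) with (4 * eps) by (field; lra).
      replace (640 / (eps * eps) * (eps * eps)) with 640 by (field; lra). nra. }
    assert (y = 4 / eps * / 2) by (unfold y; field; lra).
    assert (0 <= 4 / eps) by (unfold Rdiv; apply Rmult_le_pos; [lra| left; apply Rinv_0_lt_compat; lra]).
    rewrite H0 at 1. apply Rle_trans with (INR n * / 2). apply Rmult_le_compat_r; lra.
    apply Rmult_le_compat_l; [apply pos_INR|lra]. }
  pose proof (tail_inst n (mu n) (lam n) y dl eps Hn1 (Hmu n) ltac:(lra) ltac:(unfold dl; lra) Heps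
     ltac:(lra) HnY (Hlam n) (Hmulam n) Hy2 ltac:(lra)) as T.
  set (r := (3 / 4) ^ n + 9 * exp (- (ln y * dl * INR n))) in T.
  assert (Hr : 0 < r). { unfold r. pose proof (exp_pos (- (ln y * dl * INR n))). assert (0 < (3/4)^n) by (apply pow_lt; lra). lra. }
  set (z := exp (g / 2 * INR n)).
  assert (Hzz : z * z = exp (g * INR n)) by (unfold z; rewrite <- exp_plus; f_equal; field).
  apply (final_bound _ _ _ r z Hr).
  - unfold z. eapply Rle_trans; [|apply exp_ineq1_le].
    assert (g / 2 * INR n >= 40). { unfold g. 
      apply Rle_ge. apply Rle_trans with (eps * eps / 8 / 2 * (640 / (eps * eps))).
      right. field. lra. apply Rmult_le_compat_l; lra. } lra.
  - rewrite Hzz, <- exp_Ropp. unfold r.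
    assert ((3/4)^n <= exp (- (g * INR n))).
    { eapply Rle_trans. apply pow34. apply exp_mono. assert (g <= 1/4) by (unfold g; nra).
      pose proof (pos_INR n). nra. }
    assert (exp (- (ln y * dl * INR n)) <= exp (- (g * INR n))).
    { apply exp_mono. assert (g <= ln y * dl) by (unfold g, dl; nra). pose proof (pos_INR n). nra. }
    lra.
  - apply runtime_from_tail; auto.
Qed.

Lemma poly_exp_bound n k : (12 * (4 * INR k + 4) ^ (k + 1) <= INR n) ->
  12 * INR n ^ k <= exp (INR n / 4).
Proof. intros H. set (Q := 4 * INR k + 4).
  assert (HQ : 4 <= Q) by (unfold Q; pose proof (pos_INR k); lra).
  assert (HQk : 0 < Q ^ (k + 1)) by (apply pow_lt; lra).
  assert (Hn : 0 <= INR n) by apply pos_INR.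
  pose proof (exp_ge_pow (INR n / 4) (k + 1) ltac:(lra) ltac:(lia)) as E1.
  replace (INR (k + 1)) with (INR k + 1) in E1 by (rewrite plus_INR; reflexivity).
  replace (INR n / 4 / (INR k + 1)) with (INR n * / Q) in E1 by (unfold Q; field; pose proof (pos_INR k); lra).
  rewrite Rpow_mult_distr, pow_inv, pow_add, pow_1 in E1.
  eapply Rle_trans; [|apply E1].
  replace (INR n ^ k * INR n * / Q ^ (k + 1)) with (INR n ^ k * (INR n / Q ^ (k + 1))) by (field; lra).
  rewrite (Rmult_comm 12). apply Rmult_le_compat_l. apply pow_le; auto.
  apply (Rmult_le_reg_r (Q ^ (k+1))); auto. replace (INR n / Q ^ (k + 1) * Q ^ (k + 1)) with (INR n) by (field; lra).
  unfold Q; lra. Qed.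

Lemma part2 (mu lam : nat -> nat)
    (Hmu : forall n, (0 < mu n)%nat)
    (Hmulam : forall n, (mu n <= lam n)%nat) :
  (forall eps : nat -> R,
     (forall n, 0 < eps n < 1) ->
     (forall M : R, exists N : nat, forall n : nat, (N <= n)%nat ->
        eps n * sqrt (INR n) >= M) ->
     (forall n, INR (lam n) <= (1 - eps n) * exp 1 * INR (mu n)) ->
   forall k : nat, exists n0 : nat, forall n : nat, (n0 <= n)%nat ->
     expected_runtime_ge n (mu n) (lam n) (INR n ^ k)).
Proof. intros eps Heps Hgrow Hlam k.
  destruct (Hgrow (4 * INR k + 12)) as [N1 HN1].
  set (Nbig := (12 * (4 * k + 4) ^ (k + 1))%nat).
  exists (Nat.max N1 (Nat.max Nbig 5)). intros n Hn.
  assert (HNb : 12 * (4 * INR k + 4) ^ (k + 1) <= INR n).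
  { replace (12 * (4 * INR k + 4) ^ (k + 1)) with (INR Nbig).
    apply le_INR; lia. unfold Nbig. rewrite mult_INR, pow_INR, plus_INR, mult_INR. replace (INR 12) with 12 by (simpl; ring). replace (INR 4) with 4 by (simpl; ring). reflexivity. }
  assert (H5 : 5 <= INR n) by (replace 5 with (INR 5) by (simpl; ring); apply le_INR; lia).
  specialize (HN1 n ltac:(lia)). destruct (Heps n) as [He0 He1]. set (e := eps n) in *.
  set (s := sqrt (INR n)) in *.
  assert (Hss : s * s = INR n) by (apply sqrt_sqrt; lra).
  assert (Hs2 : 2 <= s). { destruct (Rle_lt_dec 2 s); auto. assert (0 <= s) by apply sqrt_pos. nra. }
  assert (Hlns := ln_ge_half s Hs2).
  assert (Hes : 4 * INR k + 12 <= e * s) by lra.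
  pose proof (pos_INR k) as Hk0.
  set (dl := e / (2 * s)).
  assert (Hsdl : s * dl = e / 2) by (unfold dl; field; lra).
  assert (H1 : / s + s * dl <= e).
  { rewrite Hsdl. assert (/ s <= e / 2).
    { apply (Rmult_le_reg_r s). lra. rewrite Rinv_l by lra. lra. } lra. }
  assert (H2 : s <= INR n * ln s).
  { rewrite <- Hss. rewrite Rmult_assoc. assert (1 <= s * ln s) by nra. nra. }
  assert (Hn1 : (1 <= n)%nat) by lia.
  pose proof (tail_inst n (mu n) (lam n) s dl e Hn1 (Hmu n) ltac:(lra)
    ltac:(unfold dl; apply Rdiv_lt_0_compat; lra) (Heps n) H1 H2 (Hlam n) (Hmulam n) Hs2 ltac:(lra)) as T.
  set (r := (3 / 4) ^ n + 9 * exp (- (ln s * dl * INR n))) in T.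
  assert (Hr : 0 < r). { unfold r. pose proof (exp_pos (- (ln s * dl * INR n))). assert (0 < (3/4)^n) by (apply pow_lt; lra). lra. }
  set (P := INR n ^ k).
  assert (HP : 1 <= P). { unfold P. rewrite <- (pow1 k). apply pow_incr. lra. }
  assert (Hrb : r <= / (6 * P)).
  { assert (HA : (3/4) ^ n <= / (12 * P)).
    { eapply Rle_trans. apply pow34. rewrite exp_Ropp. apply Rinv_le_contravar. lra.
      apply poly_exp_bound; auto. }
    assert (HB : exp (- (ln s * dl * INR n)) <= / (108 * P)).
    { assert (Hx : ln s * dl * INR n >= INR (k + 3) * ln (INR n)).
      { rewrite <- Hss, ln_mult by lra. rewrite plus_INR. simpl (INR 3).
        replace (ln s * dl * (s * s)) with (ln s * (s * dl) * s) by ring. rewrite Hsdl.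
        assert (0 < ln s) by lra. nra. }
      apply Rle_trans with (exp (- (INR (k + 3) * ln (INR n)))). apply exp_mono. lra.
      rewrite exp_Ropp, <- pow_exp_ln by lra. rewrite pow_add. apply Rinv_le_contravar. lra.
      fold P. assert (125 <= INR n ^ 3) by (simpl; nra). nra. }
    unfold r. replace (/ (6 * P)) with (/ (12 * P) + 9 * / (108 * P)) by (field; lra). lra. }
  apply (ert_mono _ _ _ (/ (4 * r) - 1 / 2)).
  - assert (/ (4 * / (6 * P)) <= / (4 * r)) by (apply Rinv_le_contravar; lra).
    replace (/ (4 * / (6 * P))) with (6 * P / 4) in H by (field; lra). lra.
  - apply runtime_from_tail; auto.
Qed.


Theorem theorem3 (mu lam : nat -> nat)
    (Hmu : forall n, (0 < mu n)%nat)
    (Hlam : forall n, (0 < lam n)%nat)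
    (Hmulam : forall n, (mu n <= lam n)%nat) :
  (* Part 1: constant epsilon => exponential expected runtime *)
  ((exists eps : R, 0 < eps < 1 /\
      forall n, INR (lam n) <= (1 - eps) * exp 1 * INR (mu n)) ->
   exists c : R, 0 < c /\ exists n0 : nat, forall n : nat, (n0 <= n)%nat ->
     expected_runtime_ge n (mu n) (lam n) (exp (c * INR n)))
  /\
  (* Part 2: epsilon(n) = omega(1/sqrt n) => super-polynomial expected runtime *)
  (forall eps : nat -> R,
     (forall n, 0 < eps n < 1) ->
     (forall M : R, exists N : nat, forall n : nat, (N <= n)%nat ->
        eps n * sqrt (INR n) >= M) ->
     (forall n, INR (lam n) <= (1 - eps n) * exp 1 * INR (mu n)) ->
   forall k : nat, exists n0 : nat, forall n : nat, (n0 <= n)%nat ->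
     expected_runtime_ge n (mu n) (lam n) (INR n ^ k)).
Proof.
  split.
  - apply part1; auto.
  - apply part2; auto.
Qed.
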